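(* Every permutation class containing only finitely many simple permutations is partially well-ordered under the pattern containment order, i.e. it contains no infinite antichain.
   Context: A permutation $\pi$ contains $\sigma$ ($\sigma\le\pi$) if some subsequence of $\pi$ has the same relative order as $\sigma$; this is a partial order on all finite permutations. A permutation class is a downset under $\le$. An antichain is a set of pairwise incomparable permutations. An interval of a permutation is a set of contiguous positions whose values form a contiguous set; a permutation of length $n$ is simple if its only intervals have sizes $0,1,n$. *)

(* Defs.v *)
(* Permutations of length n are sequences of nat that are
   rearrangements of [:: 0; 1; ...; n-1] (one-line notation, 0-based). *)
From mathcomp Require Import all_boot.
Set Implicit Arguments. Unset Strict Implicit. Unset Printing Implicit Defensive.

Definition is_perm (s : seq nat) : Prop := perm_eq s (iota 0 (size s)).

Definition same_pattern (t u : seq nat) : Prop :=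
  size t = size u /\
  forall i j, i < size t -> j < size t ->
    (nth 0 t i < nth 0 t j) = (nth 0 u i < nth 0 u j).

Definition contains (pi sigma : seq nat) : Prop :=
  exists t, subseq t pi /\ same_pattern t sigma.

Definition perm_class (C : seq nat -> Prop) : Prop :=
  (forall pi, C pi -> is_perm pi) /\
  (forall pi sigma, C pi -> is_perm sigma -> contains pi sigma -> C sigma).

Definition is_interval (s : seq nat) (i j : nat) : Prop :=
  i <= j /\ j <= size s /\
  exists a, perm_eq (take (j - i) (drop i s)) (iota a (j - i)).

Definition simple (s : seq nat) : Prop :=
  is_perm s /\
  forall i j, is_interval s i j ->
    j - i = 0 \/ j - i = 1 \/ j - i = size s.

Definition has_infinite_antichain (C : seq nat -> Prop) : Prop :=
  exists f : nat -> seq nat,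
    (forall n, C (f n)) /\
    (forall m n, m <> n -> ~ contains (f n) (f m)).

(* Main.v *)
Require Import Defs.
From mathcomp Require Import all_boot.
From Stdlib Require Import Lia Classical ClassicalEpsilon.
Set Implicit Arguments. Unset Strict Implicit. Unset Printing Implicit Defensive.

Ltac nlia :=
  repeat match goal with
  | H : is_true (_ && _) |- _ => case/andP: H; intros
  | H : is_true (_ || _) |- _ => case/orP: H; intros
  | H : is_true (~~ (_ && _)) |- _ => rewrite negb_and in H
  | H : is_true (~~ (_ || _)) |- _ => rewrite negb_or in H
  | H : is_true (~~ ~~ _) |- _ => rewrite negbK in H
  | H : is_true (_ <= _) |- _ => move/leP in H
  | H : is_true (~~ (_ <= _)) |- _ => rewrite -ltnNge in H
  | H : ~ is_true _ |- _ => move/negP in H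
  | H : is_true (_ == _) |- _ => move/eqP in H
  | H : is_true (_ != _) |- _ => move/eqP in H
  | |- is_true true => exact isT
  | |- is_true false => exfalso
  | H : is_true false |- _ => discriminate H
  | |- ~ _ => intro
  | |- _ -> _ => intro
  | |- is_true (_ && _) => apply/andP; split
  | |- is_true (_ <= _) => apply/leP
  | |- is_true (_ != _) => apply/eqP
  | |- is_true (_ == _) => apply/eqP
  | |- is_true (~~ _) => apply/negP; intro
  | |- is_true (_ || _) => apply/negPn; rewrite negb_or; apply/negP; intro
  end; try change (Equality.sort Datatypes_nat__canonical__eqtype_Equality) with nat in *; change addn with Nat.add in *; change subn with Nat.sub in *; change muln with Nat.mul in *; lia.


Definition emb (s p : seq nat) (f : nat -> nat) : Prop :=
  (forall x y, x < y -> y < size s -> f x < f y) /\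
  (forall x, x < size s -> f x < size p) /\
  (forall x y, x < size s -> y < size s ->
     (nth 0 s x < nth 0 s y) = (nth 0 p (f x) < nth 0 p (f y))).

Definition le_p (s p : seq nat) := exists f, emb s p f.

Lemma le_p_trans s p q : le_p s p -> le_p p q -> le_p s q.
Proof.
move=> [f [f1 [f2 f3]]] [g [g1 [g2 g3]]]; exists (fun x => g (f x)); split; [|split].
- move=> x y xy ys; apply: g1; [exact: f1 | exact: f2].
- move=> x xs; apply: g2; exact: f2.
- move=> x y xs ys; rewrite f3 // g3 //; exact: f2.
Qed.

Lemma subseq_mk (p : seq nat) : forall f m,
  (forall x y, x < y -> y < m -> f x < f y) ->
  (forall x, x < m -> f x < size p) ->
  subseq (mkseq (fun x => nth 0 p (f x)) m) p.
Proof.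
elim: p => [|a p IH] f m Hinc Hr.
  case: m Hinc Hr => [|m] _ Hr; first by [].
  by have := Hr 0 isT.
case: m Hinc Hr => [|m] Hinc Hr; first by rewrite /mkseq /=; case: (a::p).
have Hmk : forall g : nat -> nat, mkseq g m.+1 = g 0 :: mkseq (fun x => g x.+1) m.
  move=> g; rewrite /mkseq /=; congr (_ :: _).
  have -> : iota 1 m = map (addn 1) (iota 0 m) by rewrite -iotaDl.
  by rewrite -map_comp.
case E: (f 0) => [|f0].
- rewrite Hmk E /= eqxx.
  have -> : mkseq (fun x => nth 0 (a :: p) (f x.+1)) m =
            mkseq (fun x => nth 0 p (f x.+1).-1) m.
    rewrite /mkseq; apply/eq_in_map => x; rewrite mem_iota => /andP [_ xm].
    have := Hinc 0 x.+1 isT xm; rewrite E; by case: (f x.+1).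
  apply: IH.
  + move=> x y xy ym; have := Hinc x.+1 y.+1 xy ym; have := Hinc 0 x.+1 isT (ltn_trans xy ym); rewrite E; nlia.
  + move=> x xm; have := Hr x.+1 xm; have := Hinc 0 x.+1 isT xm; rewrite E /=; nlia.
- have -> : mkseq (fun x => nth 0 (a :: p) (f x)) m.+1 =
            mkseq (fun x => nth 0 p (f x).-1) m.+1.
    rewrite /mkseq; apply/eq_in_map => x; rewrite mem_iota => /andP [_ xm].
    case: x xm => [|x] xm; first by rewrite E.
    have := Hinc 0 x.+1 isT xm; rewrite E; by case: (f x.+1).
  apply: subseq_trans (subseq_cons p a); apply: IH.
  + move=> x y xy ym; have := Hinc x y xy ym.
    have h0 : 0 < f x.
      case: x xy => [|x] xy; first by rewrite E.
      have := Hinc 0 x.+1 isT (ltn_trans xy ym); rewrite E; nlia.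
    nlia.
  + move=> x xm; have := Hr x xm. case: x xm => [|x] xm; first by rewrite E /=; nlia.
    have := Hinc 0 x.+1 isT xm; rewrite E /=; nlia.
Qed.

Lemma le_p_contains s p : le_p s p -> contains p s.
Proof.
move=> [f [f1 [f2 f3]]].
exists (mkseq (fun x => nth 0 p (f x)) (size s)); split; first exact: subseq_mk.
split; first by rewrite size_mkseq.
move=> i j; rewrite size_mkseq => iS jS; rewrite !nth_mkseq // f3 //.
Qed.


Definition std (s : seq nat) : seq nat := [seq count (fun y => y < x) s | x <- s].

Lemma size_std (s : seq nat) : size (std s) = size s.
Proof. by rewrite size_map. Qed.

Lemma count_lt_mono (s : seq nat) a b : a < b -> a \in s ->
  count (fun y => y < a) s < count (fun y => y < b) s.
Proof.
move=> ab; elim: s => [|c s IH] //=; rewrite inE => /orP [/eqP ca| ain].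
- have h : count (fun y => y < a) s <= count (fun y => y < b) s.
    by apply: sub_count => y /= ya; apply: ltn_trans ya ab.
  rewrite -ca ltnn ab /=; nlia.
- have h := IH ain.
  have h2 : ((c < a) : nat) <= (c < b).
    by case ca: (c < a) => //; rewrite (ltn_trans ca ab).
  have := leq_add h2 h; nlia.
Qed.

Lemma std_cmp (s : seq nat) x y : x < size s -> y < size s ->
  (nth 0 (std s) x < nth 0 (std s) y) = (nth 0 s x < nth 0 s y).
Proof.
move=> xs ys; rewrite !(nth_map 0) //.
case: (ltnP (nth 0 s x) (nth 0 s y)) => ab.
- by apply: count_lt_mono ab _; apply: mem_nth.
- apply/negbTE; rewrite -leqNgt; apply: sub_count => z /= zb.
  exact: leq_trans zb ab.
Qed.

Lemma perm_of (t : seq nat) : uniq t -> (forall x, x \in t -> x < size t) ->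
  perm_eq t (iota 0 (size t)).
Proof.
move=> ut ht; apply: uniq_perm => //; first exact: iota_uniq.
apply: (uniq_min_size ut _ _).2; last by rewrite size_iota.
by move=> x /ht; rewrite mem_iota.
Qed.

Lemma is_perm_uniq (s : seq nat) : is_perm s -> uniq s.
Proof. by rewrite /is_perm => /perm_uniq ->; apply: iota_uniq. Qed.

Lemma std_perm (s : seq nat) : uniq s -> is_perm (std s).
Proof.
move=> us; rewrite /is_perm; apply: perm_of.
- rewrite map_inj_in_uniq // => a b ain bin eqab; apply/eqP.
  case: (ltngtP a b) => // ab.
  + by have := count_lt_mono ab ain; rewrite eqab ltnn.
  + by have := count_lt_mono ab bin; rewrite eqab ltnn.
- move=> z /mapP [a ain ->]; rewrite size_std.
  rewrite -(count_predC (fun y => y < a) s).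
  have : 0 < count (predC (fun y => y < a)) s.
    by rewrite -has_count; apply/hasP; exists a => //=; rewrite ltnn.
  nlia.
Qed.

Definition incr (g : nat -> nat) (m : nat) :=
  forall x y, x < y -> y < m -> g x < g y.

Lemma std_sub (pi : seq nat) m g : uniq pi -> incr g m ->
  (forall x, x < m -> g x < size pi) ->
  is_perm (std (mkseq (fun x => nth 0 pi (g x)) m)) /\
  le_p (std (mkseq (fun x => nth 0 pi (g x)) m)) pi.
Proof.
move=> upi ginc grng; split.
- apply: std_perm; apply/mkseq_uniqP => x y; rewrite !inE => xm ym.
  move/eqP; rewrite nth_uniq ?grng // => /eqP gxy.
  case: (ltngtP x y) => // xy.
  + by have := ginc x y xy ym; rewrite gxy ltnn.
  + by have := ginc y x xy xm; rewrite gxy ltnn.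
- exists g; rewrite /emb size_std size_mkseq; split; [exact: ginc|split; first exact: grng].
  move=> x y xm ym; rewrite std_cmp ?size_mkseq // !nth_mkseq //.
Qed.

Lemma small_le (s : seq nat) (p : seq nat) : size s <= 1 -> size s <= size p -> le_p s p.
Proof.
move=> s1 sp; exists id; split; [|split].
- move=> x y xy ys; nlia.
- move=> x xs; nlia.
- move=> x y xs ys; have -> : x = y by nlia. by rewrite !ltnn.
Qed.


Definition conv (pi : seq nat) lo hi := forall x y z,
  lo <= x < hi -> lo <= y < hi -> z < size pi -> ~~ (lo <= z < hi) ->
  ~~ ((nth 0 pi x < nth 0 pi z) && (nth 0 pi z < nth 0 pi y)).

Definition decomp (pi : seq nat) k (bnd : nat -> nat) :=
  [/\ bnd 0 = 0, bnd k = size pi, (forall p, p < k -> bnd p < bnd p.+1)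
    & (forall p, p < k -> conv pi (bnd p) (bnd p.+1))].

Definition sigp (pi : seq nat) k (bnd : nat -> nat) := std (mkseq (fun p => nth 0 pi (bnd p)) k).
Definition compp (pi : seq nat) (bnd : nat -> nat) p :=
  std (mkseq (fun x => nth 0 pi (bnd p + x)) (bnd p.+1 - bnd p)).

Lemma bnd_mono k (bnd : nat -> nat) : (forall p, p < k -> bnd p < bnd p.+1) ->
  forall p q, p <= q -> q <= k -> bnd p <= bnd q.
Proof.
move=> H p q; elim: q => [|q IH] pq qk.
  by have -> : p = 0 by nlia.
rewrite leq_eqVlt in pq; case/orP: pq => [/eqP -> //|pq].
have := IH pq (ltnW qk); have := H q qk; nlia.
Qed.

Lemma bnd_smono k (bnd : nat -> nat) : (forall p, p < k -> bnd p < bnd p.+1) ->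
  forall p q, p < q -> q <= k -> bnd p < bnd q.
Proof.
move=> H p q pq qk; have := H p (leq_trans pq qk); have := bnd_mono H pq qk; nlia.
Qed.

Lemma block_exists (pi : seq nat) k bnd x : decomp pi k bnd -> x < size pi ->
  exists p, p < k /\ bnd p <= x < bnd p.+1.
Proof.
case=> b0 bk bs _ xn.
suff : forall d q, q + d = k -> bnd q <= x -> exists p, p < k /\ bnd p <= x < bnd p.+1.
  by move=> h; apply: (h k 0) => //; rewrite b0.
elim=> [|d IH] q qd bq.
  have qk : q = k by nlia.
  by exfalso; move: bq; rewrite qk bk; nlia.
case: (ltnP x (bnd q.+1)) => xq.
  exists q; split; nlia.
apply: IH xq; nlia.
Qed.

Lemma block_unique k (bnd : nat -> nat) p q x :
  (forall p, p < k -> bnd p < bnd p.+1) -> p < k -> q < k ->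
  bnd p <= x < bnd p.+1 -> bnd q <= x < bnd q.+1 -> p = q.
Proof.
move=> bs pk qk hp hq; case: (ltngtP p q) => // pq.
- have := bnd_mono bs pq (ltnW qk); nlia.
- have := bnd_mono bs pq (ltnW pk); nlia.
Qed.

Lemma conv_side (pi : seq nat) lo hi a b c : uniq pi -> conv pi lo hi ->
  lo <= a < hi -> lo <= b < hi -> hi <= size pi -> c < size pi -> ~~ (lo <= c < hi) ->
  ((nth 0 pi a < nth 0 pi c) = (nth 0 pi b < nth 0 pi c)) /\
  ((nth 0 pi c < nth 0 pi a) = (nth 0 pi c < nth 0 pi b)).
Proof.
move=> upi cv ha hb hn cn hc.
have na : nth 0 pi a != nth 0 pi c by rewrite nth_uniq //; nlia.
have nb : nth 0 pi b != nth 0 pi c by rewrite nth_uniq //; nlia.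
have h1 := cv a b c ha hb cn hc; have h2 := cv b a c hb ha cn hc.
split; apply/idP/idP => h; nlia.
Qed.

Lemma blk_cmp (pi : seq nat) k bnd u t x y : uniq pi -> decomp pi k bnd -> u < k -> t < k -> u != t ->
  bnd u <= x < bnd u.+1 -> bnd t <= y < bnd t.+1 ->
  (nth 0 pi x < nth 0 pi y) = (nth 0 pi (bnd u) < nth 0 pi (bnd t)).
Proof.
move=> upi [b0 bk bs bc] uk tk ut hx hy.
have hku : bnd u.+1 <= size pi by rewrite -bk; apply: (bnd_mono bs) => //; nlia.
have hkt : bnd t.+1 <= size pi by rewrite -bk; apply: (bnd_mono bs) => //; nlia.
have hu : bnd u <= bnd u < bnd u.+1 by rewrite leqnn bs.
have ht : bnd t <= bnd t < bnd t.+1 by rewrite leqnn bs.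
have yu : ~~ (bnd u <= y < bnd u.+1).
  apply/negP => hyu; have := block_unique bs uk tk hyu hy; move/eqP: ut; done.
have tu : ~~ (bnd t <= bnd u < bnd t.+1).
  apply/negP => hyu; have := block_unique bs tk uk hyu hu; move/eqP: ut; auto.
have yn : y < size pi by nlia.
have un : bnd u < size pi by nlia.
rewrite (conv_side upi (bc u uk) hx hu hku yn yu).1.
by rewrite (conv_side upi (bc t tk) hy ht hkt un tu).2.
Qed.

Lemma min_ex (P : nat -> Prop) : (exists n, P n) -> exists n, P n /\ forall m, P m -> n <= m.
Proof.
move=> [n Pn]; apply: NNPP => H.
suff : forall d m, m <= d -> ~ P m by move=> h; exact: (h n n (leqnn n) Pn).
elim=> [|d IH] m md Pm.
  apply: H; exists m; split => // m' _; nlia.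
apply: H; exists m; split => // m' Pm'.
case: (leqP m m') => // lt; exfalso; apply: (IH m') Pm'; nlia.
Qed.


Lemma size_sigp (pi : seq nat) k bnd : size (sigp pi k bnd) = k.
Proof. by rewrite size_std size_mkseq. Qed.

Lemma size_comp (pi : seq nat) bnd p : size (compp pi bnd p) = bnd p.+1 - bnd p.
Proof. by rewrite size_std size_mkseq. Qed.

Lemma sig_cmp (pi : seq nat) k bnd u t : u < k -> t < k ->
  (nth 0 (sigp pi k bnd) u < nth 0 (sigp pi k bnd) t) =
  (nth 0 pi (bnd u) < nth 0 pi (bnd t)).
Proof. by move=> uk tk; rewrite std_cmp ?size_mkseq // !nth_mkseq. Qed.

Lemma comp_cmp (pi : seq nat) bnd p x y : x < bnd p.+1 - bnd p -> y < bnd p.+1 - bnd p ->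
  (nth 0 (compp pi bnd p) x < nth 0 (compp pi bnd p) y) =
  (nth 0 pi (bnd p + x) < nth 0 pi (bnd p + y)).
Proof. by move=> xk yk; rewrite std_cmp ?size_mkseq // !nth_mkseq. Qed.

Lemma sig_props (pi : seq nat) k bnd : uniq pi -> decomp pi k bnd ->
  is_perm (sigp pi k bnd) /\ le_p (sigp pi k bnd) pi.
Proof.
move=> upi [b0 bk bs bc]; apply: std_sub => //.
- move=> x y xy yk; exact: (bnd_smono bs xy (ltnW yk)).
- move=> x xk; rewrite -bk; have := bs x xk; have := bnd_mono bs xk (leqnn k); nlia.
Qed.

Lemma comp_props (pi : seq nat) k bnd p : uniq pi -> decomp pi k bnd -> p < k ->
  is_perm (compp pi bnd p) /\ le_p (compp pi bnd p) pi.
Proof.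
move=> upi [b0 bk bs bc] pk; apply: std_sub => //.
- move=> x y xy yk; nlia.
- move=> x xk; rewrite -bk; have := bnd_mono bs pk (leqnn k); nlia.
Qed.

Lemma id_decomp (pi : seq nat) : decomp pi (size pi) id.
Proof.
split => // p pk x y z hx hy zn hz.
have ex : x = p by nlia.
have ey : y = p by nlia.
rewrite ex ey; nlia.
Qed.

Lemma union_conv (pi : seq nat) k bnd i j : uniq pi -> decomp pi k bnd -> i < j -> j <= k ->
  (forall x y c, i <= x < j -> i <= y < j -> c < k -> ~~ (i <= c < j) ->
     ~~ ((nth 0 pi (bnd x) < nth 0 pi (bnd c)) && (nth 0 pi (bnd c) < nth 0 pi (bnd y)))) ->
  conv pi (bnd i) (bnd j).
Proof.
move=> upi dec ij jk rc x y z hx hy zn hz.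
have [b0 bk bs bc] := dec.
have bjn : bnd j <= size pi by rewrite -bk; apply: (bnd_mono bs).
have ik : i <= k by nlia.
have xn : x < size pi by nlia.
have yn : y < size pi by nlia.
have [bx [bxk hbx]] := block_exists dec xn.
have [by' [byk hby]] := block_exists dec yn.
have [bz [bzk hbz]] := block_exists dec zn.
have bxij : i <= bx < j.
  case: (ltnP bx i) => h1; first by have := bnd_mono bs h1 ik; nlia.
  case: (ltnP bx j) => h2; first by nlia.
  have := bnd_mono bs h2 (ltnW bxk); nlia.
have byij : i <= by' < j.
  case: (ltnP by' i) => h1; first by have := bnd_mono bs h1 ik; nlia.
  case: (ltnP by' j) => h2; first by nlia.
  have := bnd_mono bs h2 (ltnW byk); nlia.
have bzij : ~~ (i <= bz < j).
  apply/negP => /andP [h1 h2].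
  have := bnd_mono bs h1 (ltnW bzk); have := bnd_mono bs h2 jk; nlia.
have nxz : bx != bz by apply/eqP => e; rewrite e in bxij; nlia.
have nzy : bz != by' by apply/eqP => e; rewrite -e in byij; nlia.
rewrite (blk_cmp upi dec bxk bzk nxz hbx hbz) (blk_cmp upi dec bzk byk nzy hbz hby).
exact: rc.
Qed.

Lemma decomp_exists (pi : seq nat) : uniq pi -> 2 <= size pi ->
  exists k bnd, [/\ 2 <= k, decomp pi k bnd & simple (sigp pi k bnd)].
Proof.
move=> upi n2.
have [k [[k2 [bnd dec]] kmin]] :=
  min_ex (P := fun k => 2 <= k /\ exists bnd, decomp pi k bnd)
    (ex_intro _ (size pi) (conj n2 (ex_intro _ id (id_decomp pi)))).
exists k, bnd; split => //.
have [sp _] := sig_props upi dec.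
split => // i j [ij [js [a wa]]].
rewrite size_sigp in js *.
case: (leqP (j - i) 1) => l1; first by nlia.
case: (ltnP (j - i) k) => lk; last by nlia.
exfalso.
have [b0 bk bs bc] := dec.
have us := is_perm_uniq sp.
have ss := size_sigp pi k bnd.
have sw : size (take (j - i) (drop i (sigp pi k bnd))) = j - i.
  rewrite size_takel //. rewrite size_drop; nlia.
have memw : forall d, i <= d < j -> nth 0 (sigp pi k bnd) d \in iota a (j - i).
  move=> d hd; rewrite -(perm_mem wa).
  have -> : nth 0 (sigp pi k bnd) d = nth 0 (take (j - i) (drop i (sigp pi k bnd))) (d - i).
    rewrite nth_take; last by nlia.
    rewrite nth_drop; congr (nth 0 _); nlia.
  apply: mem_nth; rewrite sw; nlia.
have hc : forall x y c, i <= x < j -> i <= y < j -> c < k -> ~~ (i <= c < j) ->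
    ~~ ((nth 0 (sigp pi k bnd) x < nth 0 (sigp pi k bnd) c) &&
        (nth 0 (sigp pi k bnd) c < nth 0 (sigp pi k bnd) y)).
  move=> x y c hx hy ck hcj; apply/negP => /andP [xc cy].
  have := memw x hx; have := memw y hy; rewrite !mem_iota => hy' hx'.
  have : nth 0 (sigp pi k bnd) c \in take (j - i) (drop i (sigp pi k bnd)).
    rewrite (perm_mem wa) mem_iota; nlia.
  case/(nthP 0) => d; rewrite sw => dl; rewrite nth_take // nth_drop => e.
  have : i + d == c.
    rewrite -(nth_uniq 0 _ _ us) ?e //; rewrite ss; nlia.
  nlia.
have rc : forall x y c, i <= x < j -> i <= y < j -> c < k -> ~~ (i <= c < j) ->
    ~~ ((nth 0 pi (bnd x) < nth 0 pi (bnd c)) && (nth 0 pi (bnd c) < nth 0 pi (bnd y))).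
  move=> x y c hx hy ck hcj.
  rewrite -!(sig_cmp pi (k:=k) bnd) //; try nlia.
  exact: hc.
have ij' : i < j by nlia.
pose k' := k - (j - i) + 1.
pose bnd' := fun p => if p <= i then bnd p else bnd (p + (j - i) - 1).
have cases : forall p, p < k' ->
    (bnd' p = bnd p /\ bnd' p.+1 = bnd p.+1 /\ p < k) \/
    (bnd' p = bnd (p + (j - i) - 1) /\ bnd' p.+1 = bnd (p + (j - i) - 1).+1 /\ p + (j - i) - 1 < k) \/
    (bnd' p = bnd i /\ bnd' p.+1 = bnd j).
  move=> p pk; case: (ltngtP p i) => hp; rewrite /bnd'.
  - left; have h1 : p <= i by nlia.
    have h2 : p < i by nlia.
    rewrite h1 h2; split => //; split => //; nlia.
  - right; left.
    have h1 : (p <= i) = false by apply/negbTE; nlia.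
    have h2 : (p < i) = false by apply/negbTE; nlia.
    rewrite h1 h2; split => //; split; [congr bnd; nlia | nlia].
  - right; right.
    have h1 : p <= i by nlia.
    have h2 : (p < i) = false by apply/negbTE; nlia.
    rewrite h1 h2; split => //; [congr bnd; nlia|congr bnd; nlia].
have dec' : decomp pi k' bnd'.
  split.
  - by rewrite /bnd' leq0n.
  - rewrite /bnd' leqNgt.
    have -> : i < k' by rewrite /k'; nlia.
    have -> : k' + (j - i) - 1 = k by rewrite /k'; nlia.
    done.
  - move=> p pk; case: (cases p pk) => [[-> [-> pk']]|[[-> [-> pk']]|[-> ->]]].
    + exact: bs.
    + exact: bs.
    + exact: (bnd_smono bs ij' js).
  - move=> p pk; case: (cases p pk) => [[-> [-> pk']]|[[-> [-> pk']]|[-> ->]]].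
    + exact: bc.
    + exact: bc.
    + exact: union_conv upi dec ij' js rc.
have k2' : 2 <= k' by rewrite /k'; nlia.
have := kmin k' (conj k2' (ex_intro _ bnd' dec')).
rewrite /k'; nlia.
Qed.


Lemma decomp_emb (pi : seq nat) (pi' : seq nat) k bnd bnd' : uniq pi -> uniq pi' ->
  decomp pi k bnd -> decomp pi' k bnd' ->
  sigp pi k bnd = sigp pi' k bnd' ->
  (forall p, p < k -> le_p (compp pi bnd p) (compp pi' bnd' p)) -> le_p pi pi'.
Proof.
move=> u u' dec dec' es hle.
have [b0 bk bs bc] := dec; have [b0' bk' bs' bc'] := dec'.
have rep : forall a t, a < k -> t < k ->
    (nth 0 pi (bnd a) < nth 0 pi (bnd t)) = (nth 0 pi' (bnd' a) < nth 0 pi' (bnd' t)).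
  move=> a t ak tk; rewrite -(sig_cmp pi bnd ak tk) -(sig_cmp pi' bnd' ak tk) es //.
have [Phi hPhi] : exists Phi : nat -> nat -> nat, forall p, p < k ->
    emb (compp pi bnd p) (compp pi' bnd' p) (Phi p).
  exists (fun p => epsilon (inhabits id)
    (fun f => p < k -> emb (compp pi bnd p) (compp pi' bnd' p) f)).
  move=> p pk; apply: (epsilon_spec (inhabits id)
    (fun f => p < k -> emb (compp pi bnd p) (compp pi' bnd' p) f)) => //.
  have [f hf] := hle p pk; by exists f.
have [B hB] : exists B : nat -> nat, forall x, x < size pi ->
    B x < k /\ bnd (B x) <= x < bnd (B x).+1.
  exists (fun x => epsilon (inhabits 0)
    (fun p => x < size pi -> p < k /\ bnd p <= x < bnd p.+1)).
  move=> x xn; apply: (epsilon_spec (inhabits 0)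
    (fun p => x < size pi -> p < k /\ bnd p <= x < bnd p.+1)) => //.
  have [p hp] := block_exists dec xn; by exists p.
have bkn : forall p, p < k -> bnd' p.+1 <= size pi'.
  by move=> p pk; rewrite -bk'; apply: (bnd_mono bs').
have hpt : forall x, x < size pi ->
    x - bnd (B x) < size (compp pi bnd (B x)) /\
    bnd' (B x) <= bnd' (B x) + Phi (B x) (x - bnd (B x)) < bnd' (B x).+1.
  move=> x xn; have [bk1 bk2] := hB x xn.
  have [_ [r _]] := hPhi _ bk1.
  have o : x - bnd (B x) < size (compp pi bnd (B x)) by rewrite size_comp; nlia.
  have := r _ o; rewrite size_comp; split => //; nlia.
exists (fun x => bnd' (B x) + Phi (B x) (x - bnd (B x))); split; [|split].
- move=> x y xy yn.
  have xn : x < size pi by nlia.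
  have [bx1 bx2] := hB x xn; have [by1 by2] := hB y yn.
  have [ox hx] := hpt x xn; have [oy hy] := hpt y yn.
  case: (ltngtP (B x) (B y)) => e.
  + have := bnd_mono bs' e (ltnW by1); nlia.
  + have := bnd_mono bs e (ltnW bx1); nlia.
  + have [inc _] := hPhi _ bx1.
    have : Phi (B x) (x - bnd (B x)) < Phi (B x) (y - bnd (B x)).
      apply: inc; first by nlia. rewrite e; move: oy; rewrite !size_comp; nlia.
    rewrite -e; nlia.
- move=> x xn; have [bx1 _] := hB x xn; have [_ hx] := hpt x xn.
  have := bkn _ bx1; nlia.
- move=> x y xn yn.
  have [bx1 bx2] := hB x xn; have [by1 by2] := hB y yn.
  have [ox hx] := hpt x xn; have [oy hy] := hpt y yn.
  case: (eqVneq (B x) (B y)) => e.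
  + move: oy hy by2; rewrite -e => oy hy by2.
    have [_ [_ cm]] := hPhi _ bx1.
    have := cm _ _ ox oy.
    have ox' : x - bnd (B x) < bnd (B x).+1 - bnd (B x) by move: ox; rewrite size_comp.
    have oy' : y - bnd (B x) < bnd (B x).+1 - bnd (B x) by move: oy; rewrite size_comp.
    have px' : Phi (B x) (x - bnd (B x)) < bnd' (B x).+1 - bnd' (B x) by nlia.
    have py' : Phi (B x) (y - bnd (B x)) < bnd' (B x).+1 - bnd' (B x) by nlia.
    rewrite (@comp_cmp pi bnd _ _ _ ox' oy') (@comp_cmp pi' bnd' _ _ _ px' py').
    have -> : bnd (B x) + (x - bnd (B x)) = x by nlia.
    have -> : bnd (B x) + (y - bnd (B x)) = y by nlia.
    by move=> ->.
  + rewrite (blk_cmp u dec bx1 by1 e bx2 by2) rep //.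
    by rewrite (blk_cmp u' dec' bx1 by1 e hx hy).
Qed.


Definition wqo (T : Type) (R : T -> T -> Prop) (S : T -> Prop) :=
  forall g : nat -> T, (forall n, S (g n)) -> exists i j, i < j /\ R (g i) (g j).

Lemma incr_mono (phi : nat -> nat) : (forall i, phi i < phi i.+1) ->
  forall i j, i < j -> phi i < phi j.
Proof.
move=> H i; elim=> [|j IH] // ij.
rewrite ltnS leq_eqVlt in ij; case/orP: ij => [/eqP ->|ij]; first exact: H.
have := IH ij; have := H j; nlia.
Qed.

Lemma chain_trans T (R : T -> T -> Prop) (g : nat -> T) (phi : nat -> nat) :
  (forall a b c, R a b -> R b c -> R a c) ->
  (forall i, R (g (phi i)) (g (phi i.+1))) ->
  forall i j, i < j -> R (g (phi i)) (g (phi j)).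
Proof.
move=> tr H i; elim=> [|j IH] // ij.
rewrite ltnS leq_eqVlt in ij; case/orP: ij => [/eqP ->|ij]; first exact: H.
exact: tr (IH ij) (H j).
Qed.

Lemma chain_sub T (R : T -> T -> Prop) S (g : nat -> T) : wqo R S -> (forall n, S (g n)) ->
  exists phi : nat -> nat, (forall i, phi i < phi i.+1) /\
    (forall i, R (g (phi i)) (g (phi i.+1))).
Proof.
move=> W Sg.
case: (classic (exists N, forall n, N <= n -> exists m, n < m /\ R (g n) (g m))) => [[N HN]|HN].
- have [nx hnx] : exists nx : nat -> nat, forall n, N <= n -> n < nx n /\ R (g n) (g (nx n)).
    exists (fun n => epsilon (inhabits 0) (fun m => N <= n -> n < m /\ R (g n) (g m))).
    move=> n Nn; apply: (epsilon_spec (inhabits 0) (fun m => N <= n -> n < m /\ R (g n) (g m))) => //.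
    have [m hm] := HN n Nn; by exists m.
  pose phi := fun i => iter i nx N.
  have hN : forall i, N <= phi i.
    rewrite /phi; elim=> [|i IH] //=; have := (hnx _ IH).1; nlia.
  exists phi; split => i; [exact: (hnx _ (hN i)).1 | exact: (hnx _ (hN i)).2].
- have HT : forall N, exists n, N <= n /\ forall m, n < m -> ~ R (g n) (g m).
    move=> N; apply: NNPP => H; apply: HN; exists N => n Nn; apply: NNPP => H2.
    apply: H; exists n; split => // m nm Rm; apply: H2; by exists m.
  have [t ht] : exists t : nat -> nat, forall N, N <= t N /\ forall m, t N < m -> ~ R (g (t N)) (g m).
    exists (fun N => epsilon (inhabits 0) (fun n => N <= n /\ forall m, n < m -> ~ R (g n) (g m))).
    move=> N; apply: (epsilon_spec (inhabits 0) (fun n => N <= n /\ forall m, n < m -> ~ R (g n) (g m))).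
    exact: HT.
  pose psi := fun i => iter i (fun n => t n.+1) (t 0).
  have ps : forall i, psi i < psi i.+1.
    move=> i; rewrite /psi /=; have := (ht (iter i (fun n => t n.+1) (t 0)).+1).1; nlia.
  have [i [j [ij Rij]]] := W (fun i => g (psi i)) (fun i => Sg _).
  exfalso; have pij := incr_mono ps ij.
  have [M eM] : exists M, psi i = t M.
    case: (i) => [|i']; [by exists 0 | by exists (psi i').+1].
  by apply: ((ht M).2 (psi j)); rewrite -eM.
Qed.

Lemma wqo_prod T1 T2 (R1 : T1 -> T1 -> Prop) (R2 : T2 -> T2 -> Prop) S1 S2 :
  wqo R1 S1 -> wqo R2 S2 -> (forall a b c, R1 a b -> R1 b c -> R1 a c) ->
  wqo (fun a b : T1 * T2 => R1 a.1 b.1 /\ R2 a.2 b.2) (fun a => S1 a.1 /\ S2 a.2).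
Proof.
move=> W1 W2 tr g Sg.
have [phi [inc ch]] := chain_sub (g := fun n => (g n).1) W1 (fun n => (Sg n).1).
have [i [j [ij R2ij]]] := W2 (fun i => (g (phi i)).2) (fun i => (Sg _).2).
exists (phi i), (phi j); split; first exact: (incr_mono inc ij).
split => //; exact: (chain_trans (g := fun n => (g n).1) tr ch ij).
Qed.

Lemma wqo_tuple T (d : T) (R : T -> T -> Prop) S : wqo R S ->
  (forall a b c, R a b -> R b c -> R a c) -> forall K,
  wqo (fun a b : seq T => forall p, p < K -> R (nth d a p) (nth d b p))
      (fun a => forall p, p < K -> S (nth d a p)).
Proof.
move=> W tr; elim=> [|K IH] g Sg; first by exists 0, 1.
have W2 := wqo_prod W IH tr.
have Sg' : forall n, S (nth d (g n) 0) /\ (forall p, p < K -> S (nth d (behead (g n)) p)).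
  move=> n; split; first exact: Sg.
  by move=> p pK; rewrite nth_behead; apply: Sg.
have [i [j [ij [h0 h1]]]] := W2 (fun n => (nth d (g n) 0, behead (g n))) Sg'.
exists i, j; split => // -[|p] pk //=.
by have := h1 p pk; rewrite !nth_behead.
Qed.

Lemma wqo_bot T (R : T -> T -> Prop) S e : wqo R S -> (forall x, R e x) ->
  wqo R (fun x => S x \/ x = e).
Proof.
move=> W He g Sg.
case: (classic (exists n, g n = e)) => [[n en]|H].
  by exists n, n.+1; split => //; rewrite en.
apply: W => n; case: (Sg n) => // en; case: H; by exists n.
Qed.

Lemma wqo_fin (L : seq (seq nat)) : wqo (@eq (seq nat)) (fun s => s \in L).
Proof.
move=> g Lg.
have : ~~ uniq (mkseq g (size L).+1).
  apply/negP => U.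
  have sub : {subset mkseq g (size L).+1 <= L} by move=> x /mapP [y _ ->].
  have := uniq_leq_size U sub; rewrite size_mkseq => H.
  have : (size L).+1 <= size L by exact: H.
  by rewrite ltnn.
case/(uniqPn [::]) => i [j [ij jn e]].
rewrite size_mkseq in jn; rewrite !nth_mkseq // in e; last by nlia.
by exists i, j.
Qed.

Lemma sizeL (L : seq (seq nat)) s : s \in L -> size s <= foldr maxn 0 (map size L).
Proof.
elim: L => //= a L IH; rewrite inE => /orP [/eqP ->|sL]; first exact: leq_maxl.
exact: leq_trans (IH sL) (leq_maxr _ _).
Qed.


Definition bad (h : nat -> seq nat) := forall i j, i < j -> ~ le_p (h i) (h j).

Lemma no_bad (C : seq nat -> Prop) (L : seq (seq nat)) : perm_class C ->
  (forall pi, C pi -> simple pi -> pi \in L) ->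
  forall f, (forall n, C (f n)) -> bad f -> False.
Proof.
move=> [Cp Cd] HL f Cf bf.
pose Ext := fun p : seq (seq nat) => exists g, bad g /\ (forall n, C (g n)) /\
  forall i, i < size p -> g i = nth [::] p i.
pose M := fun p => epsilon (inhabits [::])
  (fun x => Ext (rcons p x) /\ forall y, Ext (rcons p y) -> size x <= size y).
have Mspec : forall p, Ext p -> Ext (rcons p (M p)) /\
    forall y, Ext (rcons p y) -> size (M p) <= size y.
  move=> p [g [bg [Cg eg]]].
  apply: (epsilon_spec (inhabits [::])
    (fun x => Ext (rcons p x) /\ forall y, Ext (rcons p y) -> size x <= size y)).
  have E0 : Ext (rcons p (g (size p))).
    exists g; split => //; split => // i; rewrite size_rcons nth_rcons => isp.
    case: (ltnP i (size p)) => h; first exact: eg.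
    have -> : i = size p by nlia.
    by rewrite eqxx.
  have [m [[y [sy Ey]] mmin]] :=
    min_ex (P := fun m => exists y, size y = m /\ Ext (rcons p y))
      (ex_intro _ _ (ex_intro _ _ (conj erefl E0))).
  exists y; split => // y' Ey'; rewrite sy; apply: mmin; by exists y'.
pose pre := fun n => iter n (fun p => rcons p (M p)) [::].
pose h := fun n => M (pre n).
have size_pre : forall n, size (pre n) = n.
  by elim=> [|n IH] //; rewrite /pre /= size_rcons -/(pre n) IH.
have nth_pre : forall n i, i < n -> nth [::] (pre n) i = h i.
  elim=> [|n IH] i // iN.
  rewrite /pre /= -/(pre n) nth_rcons size_pre.
  case: (ltnP i n) => h1; first exact: IH.
  have -> : i = n by nlia.
  by rewrite eqxx.
have E0 : Ext [::] by exists f.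
have Ext_pre : forall n, Ext (pre n).
  elim=> [|n IH] //; rewrite /pre /= -/(pre n); exact: (Mspec _ IH).1.
have hbad : bad h.
  move=> i j ij; have [g [bg [Cg eg]]] := Ext_pre j.+1.
  have i1 : i < j.+1 by nlia.
  have j1 : j < j.+1 by nlia.
  rewrite -(nth_pre _ _ i1) -(nth_pre _ _ j1) -!eg ?size_pre //.
  exact: bg.
have hC : forall n, C (h n).
  move=> n; have [g [bg [Cg eg]]] := Ext_pre n.+1.
  have n1 : n < n.+1 by [].
  rewrite -(nth_pre _ _ n1) -eg ?size_pre //.
have hmin : forall n g, bad g -> (forall m, C (g m)) -> (forall i, i < n -> g i = h i) ->
    size (h n) <= size (g n).
  move=> n g bg Cg gh; apply: (Mspec _ (Ext_pre n)).2.
  exists g; split => //; split => // i; rewrite size_rcons size_pre nth_rcons size_pre => iN.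
  case: (ltnP i n) => h1; first by rewrite nth_pre // gh.
  have -> : i = n by nlia.
  by rewrite eqxx.
have h2 : forall n, 2 <= size (h n).
  move=> n; case: (leqP 2 (size (h n))) => // hs; exfalso.
  case: (leqP (size (h n)) (size (h n.+1))) => hs'.
  - apply: (hbad n n.+1 (ltnSn n)); apply: small_le; nlia.
  - apply: (hbad n.+1 n.+2 (ltnSn _)); apply: small_le; nlia.
have hu : forall n, uniq (h n) by move=> n; apply: is_perm_uniq; apply: Cp; apply: hC.
pose D := fun n => epsilon (inhabits (0, fun x : nat => x))
  (fun kb : nat * (nat -> nat) =>
     [/\ 2 <= kb.1, decomp (h n) kb.1 kb.2 & simple (sigp (h n) kb.1 kb.2)]).
have hD : forall n, [/\ 2 <= (D n).1, decomp (h n) (D n).1 (D n).2 &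
    simple (sigp (h n) (D n).1 (D n).2)].
  move=> n; apply: (epsilon_spec (inhabits (0, fun x : nat => x))
    (fun kb : nat * (nat -> nat) =>
     [/\ 2 <= kb.1, decomp (h n) kb.1 kb.2 & simple (sigp (h n) kb.1 kb.2)])).
  have [k [b hk]] := decomp_exists (hu n) (h2 n); by exists (k, b).
have compC : forall n p, p < (D n).1 -> C (compp (h n) (D n).2 p) /\
    le_p (compp (h n) (D n).2 p) (h n) /\ size (compp (h n) (D n).2 p) < size (h n).
  move=> n p pk; have [k2 dec _] := hD n.
  have [cp cl] := comp_props (hu n) dec pk.
  split; first exact: Cd (hC n) cp (le_p_contains cl).
  split => //; clear cp cl; rewrite size_comp.
  have [b0 bk bs _] := dec.
  have := bnd_mono bs pk (leqnn _); have := h2 n.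
  case: p pk => [|p] pk.
    have := bnd_smono bs k2 (leqnn _); nlia.
  have := bnd_smono bs (isT : 0 < p.+1) (ltnW pk); nlia.
pose Bc := fun a => exists n p, p < (D n).1 /\ a = compp (h n) (D n).2 p.
have WB : wqo le_p Bc.
  move=> q Bq; apply: NNPP => Hq.
  have qbad : forall i j, i < j -> ~ le_p (q i) (q j).
    by move=> i j ij H; apply: Hq; exists i, j.
  have [nu hnu] : exists nu : nat -> nat, forall m,
      exists p, p < (D (nu m)).1 /\ q m = compp (h (nu m)) (D (nu m)).2 p.
    exists (fun m => epsilon (inhabits 0)
      (fun n => exists p, p < (D n).1 /\ q m = compp (h n) (D n).2 p)).
    move=> m; apply: (epsilon_spec (inhabits 0)
      (fun n => exists p, p < (D n).1 /\ q m = compp (h n) (D n).2 p)).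
    have [n [p hp]] := Bq m; by exists n, p.
  have [N [[m0 em0] Nmin]] := min_ex (P := fun N => exists m, nu m = N)
    (ex_intro _ (nu 0) (ex_intro _ 0 erefl)).
  have qC : forall m, C (q m) /\ le_p (q m) (h (nu m)).
    move=> m; have [p [pk ->]] := hnu m; have [c1 [c2 _]] := compC _ _ pk; by split.
  pose g := fun i => if i < N then h i else q (m0 + (i - N)).
  have gbad : bad g.
    move=> i j ij; rewrite /g.
    case: (ltnP i N) => iN; case: (ltnP j N) => jN.
    - exact: hbad.
    - move=> H; apply: (hbad i (nu (m0 + (j - N)))).
        have := Nmin (nu (m0 + (j - N))) (ex_intro _ _ erefl); nlia.
      exact: le_p_trans H (qC _).2.
    - by exfalso; nlia.
    - apply: qbad; nlia.
  have gC : forall i, C (g i) by move=> i; rewrite /g; case: (i < N); [apply: hC | apply: (qC _).1].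
  have gh : forall i, i < N -> g i = h i by move=> i iN; rewrite /g iN.
  have := hmin N g gbad gC gh; rewrite /g ltnn subnn addn0.
  have [p [pk ->]] := hnu m0; have [_ [_ sz]] := compC _ _ pk.
  move: sz; rewrite em0; nlia.
pose K := foldr maxn 0 (map size L).
have tr : forall a b c, le_p a b -> le_p b c -> le_p a c by move=> a b c; apply: le_p_trans.
have WB' := wqo_bot WB (fun x => small_le (s := [::]) (p := x) isT isT).
have Wt := @wqo_tuple _ [::] _ _ WB' tr K.
have Wp := wqo_prod (@wqo_fin L) Wt (fun a b c e1 e2 => etrans e1 e2).
pose c := fun n => (sigp (h n) (D n).1 (D n).2, mkseq (fun p => compp (h n) (D n).2 p) (D n).1).
have Sc : forall n, (c n).1 \in L /\ forall p, p < K -> Bc (nth [::] (c n).2 p) \/ nth [::] (c n).2 p = [::].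
  move=> n; have [k2 dec sim] := hD n; split.
    have [sp sl] := sig_props (hu n) dec.
    apply: HL => //; exact: Cd (hC n) sp (le_p_contains sl).
  move=> p pK; rewrite /c /=.
  case: (ltnP p (D n).1) => pk.
    by left; rewrite nth_mkseq //; exists n, p.
  by right; rewrite nth_default // size_mkseq.
have [i [j [ij [e1 e2]]]] := Wp c Sc.
rewrite /c /= in e1 e2.
have ek : (D i).1 = (D j).1.
  by rewrite -(size_sigp (h i) (D i).1 (D i).2) e1 size_sigp.
have [_ deci _] := hD i; have [_ decj _] := hD j.
apply: (hbad i j ij); apply: (decomp_emb (hu i) (hu j) deci (_ : decomp (h j) (D i).1 (D j).2)).
- by rewrite ek.
- by rewrite e1 ek.
- move=> p pk.
  have pK : p < K.
    have := sizeL (proj1 (Sc i)); rewrite /c /= size_sigp; nlia.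
  have := e2 p pK; rewrite !nth_mkseq //; by rewrite -ek.
Qed.


Theorem mainTheorem6 (C : seq nat -> Prop) :
  perm_class C ->
  (exists L : seq (seq nat), forall pi, C pi -> simple pi -> pi \in L) ->
  ~ has_infinite_antichain C.
Proof.
move=> cls [L HL] [f [Cf af]].
apply: (no_bad cls HL Cf) => i j ij H.
apply: (af i j _ (le_p_contains H)) => e.
by rewrite e ltnn in ij.
Qed.
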